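(* Let $\mathbf A\in\mathbb H^{m\times n}$ and $t\in\mathbb R$. Then for all $i=1,\dots,n$ and $j=1,\dots,m$, \[ \operatorname{rdet}_j\big((t\mathbf I+\mathbf A\mathbf A^{*})_{j.}(\mathbf a^{*}_{i.})\big)=r_1^{(ij)}t^{m-1}+r_2^{(ij)}t^{m-2}+\dots+r_m^{(ij)}, \] where $r_m^{(ij)}=\operatorname{rdet}_j\big((\mathbf A\mathbf A^{*})_{j.}(\mathbf a^{*}_{i.})\big)$ and $r_k^{(ij)}=\sum_{\alpha\in I_{k,m}\{j\}}\operatorname{rdet}_j\Big(\big((\mathbf A\mathbf A^{*})_{j.}(\mathbf a^{*}_{i.})\big)^{\alpha}_{\alpha}\Big)$ for $k=1,\dots,m-1$.
   Context: $\mathbb H$ is the quaternion skew field, $\mathbf A^*$ the conjugate transpose, $\mathbf a^*_{i.}$ the $i$th row of $\mathbf A^*$; $\mathbf M_{j.}(\mathbf b)$ is $\mathbf M$ with its $j$th row replaced by the row $\mathbf b$. Row determinant of $\mathbf M=(m_{ab})\in\mathbb H^{m\times m}$: $\operatorname{rdet}_j\mathbf M=\sum_{\sigma\in S_m}(-1)^{m-r}m_{j\,j_{k_1}}m_{j_{k_1}j_{k_1+1}}\cdots m_{j_{k_1+l_1}\,j}\cdots m_{j_{k_r}j_{k_r+1}}\cdots m_{j_{k_r+l_r}j_{k_r}}$, where $\sigma=(j\,j_{k_1}\dots j_{k_1+l_1})(j_{k_2}\dots j_{k_2+l_2})\cdots(j_{k_r}\dots j_{k_r+l_r})$ is the decomposition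 of $\sigma$ into $r$ disjoint cycles (fixed points included), the first cycle starting with $j$, each other cycle starting with its smallest element, and $j_{k_2}<\dots<j_{k_r}$. $L_{k,m}$ is the set of strictly increasing $k$-sequences from $\{1,\dots,m\}$ and $I_{k,m}\{j\}=\{\alpha\in L_{k,m}:j\in\alpha\}$. $\mathbf N^{\alpha}_{\alpha}$ is the principal submatrix with rows and columns indexed by $\alpha$; in $\operatorname{rdet}_j(\mathbf N^\alpha_\alpha)$ the subscript $j$ refers to the row of the submatrix coming from row $j$ of $\mathbf N$. *)

(* Defs.v *)
From HB Require Import structures.
From mathcomp Require Import all_boot all_order all_algebra all_fingroup.
From mathcomp Require Import ring.
Set Implicit Arguments. Unset Strict Implicit. Unset Printing Implicit Defensive.
Import Order.TTheory GRing.Theory Num.Theory.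
Local Open Scope ring_scope.

Section Quat.
Variable R : comNzRingType.

Record quat := Quat { qa : R; qb : R; qc : R; qd : R }.

Definition quat2tuple (q : quat) := (qa q, qb q, qc q, qd q).
Definition tuple2quat (x : R * R * R * R) :=
  let: (a, b, c, d) := x in Quat a b c d.
Lemma quat2tupleK : cancel quat2tuple tuple2quat. Proof. by case. Qed.

HB.instance Definition _ := Equality.copy quat (can_type quat2tupleK).
HB.instance Definition _ := Choice.copy quat (can_type quat2tupleK).

Definition qzero := Quat 0 0 0 0.
Definition qone := Quat 1 0 0 0.
Definition qopp (x : quat) := Quat (- qa x) (- qb x) (- qc x) (- qd x).
Definition qadd (x y : quat) :=
  Quat (qa x + qa y) (qb x + qb y) (qc x + qc y) (qd x + qd y).
Definition qmul (x y : quat) :=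
  Quat (qa x * qa y - qb x * qb y - qc x * qc y - qd x * qd y)
       (qa x * qb y + qb x * qa y + qc x * qd y - qd x * qc y)
       (qa x * qc y - qb x * qd y + qc x * qa y + qd x * qb y)
       (qa x * qd y + qb x * qc y - qc x * qb y + qd x * qa y).

Lemma qaddA : associative qadd.
Proof. by case=> ????[????][????]; rewrite /qadd /=; congr Quat; ring. Qed.
Lemma qaddC : commutative qadd.
Proof. by case=> ????[????]; rewrite /qadd /=; congr Quat; ring. Qed.
Lemma qadd0 : left_id qzero qadd.
Proof. by case=> ????; rewrite /qadd /=; congr Quat; ring. Qed.
Lemma qaddN : left_inverse qzero qopp qadd.
Proof. by case=> ????; rewrite /qadd /=; congr Quat; ring. Qed.

HB.instance Definition _ := GRing.isZmodule.Build quat qaddA qaddC qadd0 qaddN.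

Lemma qmulA : associative qmul.
Proof. by case=> ????[????][????]; rewrite /qmul /=; congr Quat; ring. Qed.
Lemma qmul1 : left_id qone qmul.
Proof. by case=> ????; rewrite /qmul /=; congr Quat; ring. Qed.
Lemma qmulr1 : right_id qone qmul.
Proof. by case=> ????; rewrite /qmul /=; congr Quat; ring. Qed.
Lemma qmulDl : left_distributive qmul qadd.
Proof. by case=> ????[????][????]; rewrite /qmul /= /qadd /=; congr Quat; ring. Qed.
Lemma qmulDr : right_distributive qmul qadd.
Proof. by case=> ????[????][????]; rewrite /qmul /= /qadd /=; congr Quat; ring. Qed.
Lemma qone_neq0 : qone != 0.
Proof.
apply/negP=> /eqP /(congr1 qa) /= /eqP; rewrite oner_eq0 //.
Qed.

HB.instance Definition _ :=
  GRing.Zmodule_isNzRing.Build quat qmulA qmul1 qmulr1 qmulDl qmulDr qone_neq0.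

Definition qreal (r : R) : quat := Quat r 0 0 0.
Definition qconj (x : quat) : quat := Quat (qa x) (- qb x) (- qc x) (- qd x).

End Quat.

Definition conjtr (R : comNzRingType) m n (A : 'M[quat R]_(m, n)) : 'M[quat R]_(n, m) :=
  \matrix_(i, j) qconj (A j i).

Definition row_repl (T : Type) m n (M : 'M[T]_(m, n)) (j : 'I_m) (b : 'rV[T]_n)
  : 'M[T]_(m, n) :=
  \matrix_(k, l) if k == j then b 0 l else M k l.

Section RowDet.
Variable R : comNzRingType.
Variable m : nat.
Implicit Types (M : 'M[quat R]_m) (s : 'S_m).

Definition cycle_prod M s (c : 'I_m) : quat R :=
  \prod_(k < #|porbit s c|) M ((s ^+ k)%g c) ((s ^+ k.+1)%g c).

Definition cycle_head s (c : 'I_m) : bool := [forall d in porbit s c, (c <= d)%N].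

(* rdet_j M = sum_s (-1)^(m-r) (cycle of j, starting at j)
                      (other cycles, each starting with its smallest element,
                       in increasing order of these smallest elements),
   r = number of cycles of s (fixed points included) *)
Definition rdet (j : 'I_m) M : quat R :=
  \sum_(s : 'S_m)
     (-1) ^+ (m - #|porbits s|) *
     (cycle_prod M s j *
      \prod_(c : 'I_m | (c \notin porbit s j) && cycle_head s c) cycle_prod M s c).

End RowDet.

(* rdet_j (N^alpha_alpha): the principal submatrix of N with rows and columns
   indexed by alpha (in increasing order), row determinant taken along the row
   coming from row j of N (0 if j is not in alpha, which never happens below) *)
Definition rdet_principal (R : comNzRingType) m (N : 'M[quat R]_m)
   (alpha : {set 'I_m}) (j : 'I_m) : quat R :=
  match [pick a : 'I_#|alpha| | enum_val a == j] with
  | Some a => rdet a (\matrix_(a1, a2) N (enum_val a1) (enum_val a2))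
  | None => 0
  end.

(* Main.v *)
Require Import Defs.
From HB Require Import structures.
From mathcomp Require Import all_boot all_order all_algebra all_fingroup.
From mathcomp Require Import ring zify.
From mathcomp Require Import reals.
Set Implicit Arguments. Unset Strict Implicit. Unset Printing Implicit Defensive.
Import Order.TTheory GRing.Theory Num.Theory.
Local Open Scope ring_scope.

Section H.
Variable R : comNzRingType.

Lemma prod_if_t (I : finType) (r : seq I) (A : {set I}) (g : I -> quat R)
   (P : pred I) (t : quat R) : (forall x, GRing.comm t x) ->
  \prod_(c <- r) (if c \in A then g c else if P c then t else 0) =
  if all (fun c => (c \in A) || P c) r then
    t ^+ (\sum_(c <- r | c \notin A) 1)%N * \prod_(c <- r) (if c \in A then g c else 1)
  else 0.
Proof.
move=> tC; elim: r => [|x r IH]; first by rewrite !big_nil /= mulr1.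
rewrite !big_cons /= IH; case: (boolP (x \in A)) => xA /=.
  case: ifP => _; last by rewrite mulr0.
  by rewrite !mulrA; congr (_ * _); apply: commrX; apply/esym/tC.
case: (P x) => /=; last by rewrite mul0r.
case: ifP => _; last by rewrite mulr0.
by rewrite mul1r exprS mulrA.
Qed.

Lemma prod_zero_or_t (I : finType) (A : {set I}) (g : I -> quat R)
   (P : pred I) (t : quat R) : (forall x, GRing.comm t x) ->
  \prod_(c : I) (if c \in A then g c else if P c then t else 0) =
  if [forall c, (c \notin A) ==> P c] then
    t ^+ #|~: A| * \prod_(c : I) (if c \in A then g c else 1)
  else 0.
Proof.
move=> tC; rewrite prod_if_t //.
have -> : all (fun c => (c \in A) || P c) (index_enum I) = [forall c, (c \notin A) ==> P c].
  apply/allP/forallP => H c; last by move: (H c); case: (c \in A).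
  by move: (H c (mem_index_enum c)); case: (c \in A).
case: ifP => // _; congr (_ ^+ _ * _).
by rewrite -sum1_card; apply: eq_bigl => c; rewrite inE.
Qed.

Lemma qrealC (t : R) (x : quat R) : GRing.comm (qreal t) x.
Proof.
case: x => a b c d; rewrite /GRing.comm.
change (qmul (qreal t) (Quat a b c d) = qmul (Quat a b c d) (qreal t)).
by rewrite /qmul /qreal /=; congr Quat; ring.
Qed.

Lemma expand_prod (I : finType) (a b : I -> quat R) :
  \prod_(i : I) (a i + b i) =
  \sum_(A : {set I}) \prod_(i : I) (if i \in A then a i else b i).
Proof.
transitivity (\prod_(i : I) \sum_(x : bool) (if x then a i else b i)).
  by apply: eq_bigr => i _; rewrite big_bool /= addrC.
rewrite bigA_distr_bigA.
rewrite (reindex (fun A : {set I} => [ffun i => i \in A])) /=; last first.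
  exists (fun f : {ffun I -> bool} => [set i | f i]) => A _.
    by apply/setP => i; rewrite inE ffunE.
  by apply/ffunP => i; rewrite ffunE inE.
by apply: eq_bigr => A _; apply: eq_bigr => i _; rewrite ffunE.
Qed.

Variable m : nat.
Implicit Types (M N : 'M[quat R]_m) (s : 'S_m).

Lemma fixX s c : s c = c -> forall k, (s ^+ k)%g c = c.
Proof. by move=> sc; elim=> [|k IH]; rewrite ?expg0 ?perm1 // expgSr permM IH sc. Qed.

Lemma porbit_fix s c : s c = c -> porbit s c = [set c].
Proof.
move=> sc; apply/setP => d; rewrite inE; apply/porbitP/eqP => [[k ->]|->].
  exact: fixX.
by exists 0%N; rewrite expg0 perm1.
Qed.

Lemma cp_fix M s c : s c = c -> cycle_prod M s c = M c c.
Proof.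
move=> sc; rewrite /cycle_prod porbit_fix // cards1 big_ord1.
by rewrite expg0 expg1 perm1 sc.
Qed.

Lemma sXS s k c : (s ^+ k.+1)%g c = s ((s ^+ k)%g c).
Proof. by rewrite expgSr permM. Qed.

Lemma cp_eq M N s c : (forall x, s x != x -> M x (s x) = N x (s x)) ->
  s c != c -> cycle_prod M s c = cycle_prod N s c.
Proof.
move=> HMN sc; apply: eq_bigr => k _; rewrite sXS; apply: HMN.
apply: contra sc => /eqP H; apply/eqP; apply: (@perm_inj _ (s ^+ k)%g).
by rewrite -permM -expgS expgSr permM.
Qed.

Lemma fix_Q s (j c : 'I_m) : s c = c -> c != j ->
  (c \notin porbit s j) && cycle_head s c.
Proof.
move=> sc cj; apply/andP; split.
  by rewrite porbit_sym porbit_fix // inE eq_sym.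
by apply/forallP => d; rewrite porbit_fix // inE; apply/implyP => /eqP ->.
Qed.

Definition rdetS (alpha : {set 'I_m}) (j : 'I_m) M : quat R :=
  \sum_(s : 'S_m | perm_on alpha s)
     (-1) ^+ (m - #|porbits s|) *
     (cycle_prod M s j *
      \prod_(c : 'I_m | (c \in alpha) && ((c \notin porbit s j) && cycle_head s c))
         cycle_prod M s c).

Lemma S1 (B N : 'M[quat R]_m) (j : 'I_m) (t : R) :
  (forall x y, N x y = B x y + (if (x == y) && (x != j) then qreal t else 0)) ->
  rdet j N = \sum_(alpha : {set 'I_m} | j \in alpha)
                rdetS alpha j B * qreal t ^+ (m - #|alpha|).
Proof.
move=> HN.
have offd s x : s x != x -> B x (s x) = N x (s x).
  by move=> sx; rewrite HN eq_sym (negbTE sx) addr0.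
have cpj s : cycle_prod N s j = cycle_prod B s j.
  case: (eqVneq (s j) j) => sj; last by rewrite (cp_eq (offd s) sj).
  by rewrite !cp_fix // HN eqxx /= addr0.
pose Q s c := (c \notin porbit s j) && cycle_head s c.
have Hprod s : \prod_(c | Q s c) cycle_prod N s c =
   \sum_(A : {set 'I_m}) (if perm_on A s && (j \in A) then
        qreal t ^+ (m - #|A|) * \prod_(c | (c \in A) && Q s c) cycle_prod B s c else 0).
  rewrite big_mkcond /=.
  rewrite (eq_bigr (fun c => (if Q s c then cycle_prod B s c else 1) +
      (if (s c == c) && (c != j) then qreal t else 0))); last first.
    move=> c _; case: (eqVneq (s c) c) => sc /=.
      case: (eqVneq c j) => cj.
        by rewrite /Q cj porbit_id /= addr0.
      by rewrite /Q fix_Q // !cp_fix // HN eqxx cj.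
    by rewrite addr0; case: ifP => // _; rewrite (cp_eq (offd s) sc).
  rewrite expand_prod; apply: eq_bigr => A _.
  rewrite (eq_bigr (fun c => if c \in A then (if Q s c then cycle_prod B s c else 1)
      else if (s c == c) && (c != j) then qreal t else 0)); last by [].
  rewrite prod_zero_or_t; last exact: qrealC.
  have -> : [forall c, (c \notin A) ==> (s c == c) && (c != j)] = perm_on A s && (j \in A).
    apply/forallP/andP => [H|[pA jA] c]; last first.
      apply/implyP => cA; rewrite (out_perm pA cA) eqxx /=.
      by apply: contraNneq cA => ->.
    split; last by move: (H j); rewrite eqxx andbF implybF negbK.
    apply/subsetP => c; rewrite inE; apply: contraR => cA.
    by move: (H c); rewrite cA /= => /andP[].
  case: ifP => // _; congr (_ ^+ _ * _).
    by have H := cardsC A; rewrite card_ord in H; rewrite -(addKn #|A| #|~: A|) H.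
  by rewrite [RHS]big_mkcond; apply: eq_bigr => c _; case: (c \in A).
rewrite /rdet; under eq_bigr do rewrite cpj Hprod mulr_sumr mulr_sumr.
rewrite exchange_big /=; apply/esym; rewrite big_mkcond; apply: eq_bigr => A _.
case: ifP => jA; last first.
  by rewrite big1 // => s _; rewrite andbF mulr0 mulr0.
rewrite /rdetS mulr_suml [LHS]big_mkcond; apply: eq_bigr => s _.
rewrite andbT; case: ifP => _; last by rewrite mulr0 mulr0.
rewrite -!mulrA; congr (_ * _); congr (_ * _); apply: commrX; apply/esym/qrealC.
Qed.
Lemma S0 (B : 'M[quat R]_m) j : rdetS [set: 'I_m] j B = rdet j B.
Proof.
rewrite /rdetS /rdet; apply: eq_big => [s|s _]; first by apply/subsetP => x _; rewrite inE.
by congr (_ * (_ * _)); apply: eq_bigl => c; rewrite inE.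
Qed.

Lemma sgn_odd n (s : 'S_n) : (-1) ^+ (n - #|porbits s|) = (-1) ^+ (odd_perm s) :> quat R.
Proof.
rewrite /odd_perm card_ord -signr_odd oddB //.
by rewrite -[X in (_ <= X)%N]card_ord; apply: leq_imset_card.
Qed.

Section Lift.
Variables (alpha : {set 'I_m}) (j : 'I_m) (jA : j \in alpha).

Definition ev (a : 'I_#|alpha|) : 'I_m := enum_val a.

Lemma ev_inj : injective ev.
Proof. exact: enum_val_inj. Qed.

Lemma evP a : ev a \in alpha.
Proof. exact: enum_valP. Qed.

Definition lf (p : 'S_#|alpha|) (x : 'I_m) : 'I_m :=
  if x \in alpha then ev (p (enum_rank_in jA x)) else x.

Lemma lf_inj p : injective (lf p).
Proof.
move=> x y; rewrite /lf; case: (boolP (x \in alpha)) => xA; case: (boolP (y \in alpha)) => yA.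
- move=> H; have H1 := perm_inj (ev_inj H); exact: (enum_rank_in_inj xA yA H1).
- by move=> H; move: yA; rewrite -H evP.
- by move=> H; move: xA; rewrite H evP.
- by [].
Qed.

Definition L p : 'S_m := perm (@lf_inj p).

Lemma L_ev p a : L p (ev a) = ev (p a).
Proof. by rewrite permE /lf evP /ev enum_valK_in. Qed.

Lemma L_out p x : x \notin alpha -> L p x = x.
Proof. by move=> xA; rewrite permE /lf (negbTE xA). Qed.

Lemma L_on p : perm_on alpha (L p).
Proof.
apply/subsetP => x; rewrite inE; apply: contraR => xA.
by rewrite L_out // eqxx.
Qed.

Lemma ev_rank x : x \in alpha -> ev (enum_rank_in jA x) = x.
Proof. exact: enum_rankK_in. Qed.

Lemma LX p n a : (L p ^+ n)%g (ev a) = ev ((p ^+ n)%g a).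
Proof. by elim: n => [|n IH]; rewrite ?expg0 ?perm1 // !expgSr !permM IH L_ev. Qed.

Lemma porbit_L p a : porbit (L p) (ev a) = ev @: porbit p a.
Proof.
apply/setP => d; apply/porbitP/imsetP => [[n ->]|[b /porbitP [n ->] ->]].
  by exists ((p ^+ n)%g a); [exact: mem_porbit | exact: LX].
by exists n; rewrite LX.
Qed.

Lemma card_porbit_L p a : #|porbit (L p) (ev a)| = #|porbit p a|.
Proof. by rewrite porbit_L card_imset //; exact: ev_inj. Qed.

Lemma cp_L M p a :
  cycle_prod M (L p) (ev a) = cycle_prod (\matrix_(a1, a2) M (ev a1) (ev a2)) p a.
Proof.
rewrite /cycle_prod card_porbit_L; apply: eq_bigr => n _.
by rewrite !LX mxE.
Qed.

Lemma ev_lt (a b : 'I_#|alpha|) : (a < b)%N -> (ev a < ev b)%N.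
Proof.
have tr : transitive (fun x y : 'I_m => (x < y)%N).
  by move=> y x z; apply: ltn_trans.
have so : sorted (fun x y : 'I_m => (x < y)%N) (enum alpha).
  apply: sorted_filter => //.
  have := iota_ltn_sorted 0 m; rewrite -val_enum_ord sorted_map enumT.
  by [].
move=> ab; rewrite /ev !(enum_val_nth j).
apply: (sorted_ltn_nth tr j so) => //; rewrite inE -cardE ltn_ord //.
Qed.

Lemma ev_leq (a b : 'I_#|alpha|) : (ev a <= ev b)%N = (a <= b)%N.
Proof.
case: (ltngtP a b) => h.
- by apply: ltnW; apply: ev_lt.
- by apply/negbTE; rewrite -ltnNge; apply: ev_lt.
- by rewrite (ord_inj h) leqnn.
Qed.

Lemma head_L p a : cycle_head (L p) (ev a) = cycle_head p a.
Proof.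
rewrite /cycle_head porbit_L; apply/forallP/forallP => H d.
  by have := H (ev d); rewrite (mem_imset _ _ ev_inj) ev_leq.
by apply/implyP => /imsetP [b bP ->]; have := H b; rewrite bP ev_leq.
Qed.


Lemma LM p q : L (p * q)%g = (L p * L q)%g.
Proof.
apply/permP => x; rewrite permM; case: (boolP (x \in alpha)) => xA.
  by rewrite -(ev_rank xA) !L_ev permM.
by rewrite !L_out.
Qed.

Lemma L1 : L 1%g = 1%g.
Proof.
apply/permP => x; rewrite perm1; case: (boolP (x \in alpha)) => xA.
  by rewrite -(ev_rank xA) !L_ev perm1.
by rewrite !L_out.
Qed.

Lemma LT a b : L (tperm a b) = tperm (ev a) (ev b).
Proof.
apply/permP => x; case: (boolP (x \in alpha)) => xA.
  rewrite -(ev_rank xA) L_ev; set c := enum_rank_in jA x.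
  case: (tpermP a b c) => [->|->|/eqP ca /eqP cb]; rewrite ?tpermL ?tpermR //.
  by rewrite tpermD // (inj_eq ev_inj) eq_sym.
rewrite L_out // tpermD //; apply: contraNneq xA => <-; exact: evP.
Qed.

Lemma odd_L p : odd_perm (L p) = odd_perm p.
Proof.
case: (prod_tpermP p) => ts -> dts.
have -> : L (\prod_(t <- ts) tperm t.1 t.2)%g =
    (\prod_(t <- map (fun t => (ev t.1, ev t.2)) ts) tperm t.1 t.2)%g.
  elim: ts {dts} => [|t ts IH]; first by rewrite !big_nil L1.
  by rewrite /= !big_cons LM LT IH.
rewrite !odd_perm_prod ?size_map //.
by rewrite all_map; apply: sub_all dts => -[x y]; rewrite /= /dpair /= (inj_eq ev_inj).
Qed.

Lemma L_inj : injective L.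
Proof.
move=> p q /permP H; apply/permP => a; apply: ev_inj.
by rewrite -!L_ev H.
Qed.

Lemma sum_L (F : 'S_m -> quat R) :
  \sum_(s | perm_on alpha s) F s = \sum_(p : 'S_#|alpha|) F (L p).
Proof.
rewrite (eq_bigl (mem (L @: [set: 'S_#|alpha|]))); last first.
  move=> s; apply/idP/imsetP => [pA | [p _ ->]]; last exact: L_on.
  have pinj : injective (fun x => enum_rank_in jA (s (ev x))).
    move=> x y H; apply/ev_inj/(@perm_inj _ s).
    by apply: (enum_rank_in_inj _ _ H); rewrite perm_closed // evP.
  exists (perm pinj); first by rewrite inE.
  apply/permP => x; case: (boolP (x \in alpha)) => xA.
    have -> : x = ev (enum_rank_in jA x) by rewrite ev_rank.
    by rewrite L_ev permE ev_rank // ev_rank // perm_closed.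
  by rewrite L_out // (out_perm pA xA).
rewrite big_imset /=; last by move=> p q _ _; apply: L_inj.
by apply: eq_bigl => p; rewrite inE.
Qed.

Lemma enum_alpha : enum alpha = map ev (enum 'I_#|alpha|).
Proof.
apply: (@eq_from_nth _ j); first by rewrite size_map size_enum_ord -cardE.
move=> i; rewrite -cardE => ilt.
rewrite (nth_map (Ordinal ilt)) ?size_enum_ord //.
by rewrite /ev (enum_val_nth j) nth_enum_ord.
Qed.

Lemma prod_alpha (P : pred 'I_m) (F : 'I_m -> quat R) :
  \prod_(c | (c \in alpha) && P c) F c = \prod_(a : 'I_#|alpha| | P (ev a)) F (ev a).
Proof.
rewrite -big_filter_cond.
have -> : [seq c <- index_enum 'I_m | c \in alpha] = enum alpha.
  by rewrite [index_enum _]unlock.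
rewrite enum_alpha big_map.
by have -> : index_enum 'I_#|alpha| = enum 'I_#|alpha| by rewrite enumT unlock.
Qed.

Lemma S2 (M : 'M[quat R]_m) : rdet_principal M alpha j = rdetS alpha j M.
Proof.
rewrite /rdet_principal; case: pickP => [a /eqP ha | H]; last first.
  by move: (H (enum_rank_in jA j)); rewrite enum_rankK_in // eqxx.
rewrite /rdetS sum_L /rdet; apply: eq_bigr => p _.
have ha' : ev a = j by [].
rewrite -ha' !sgn_odd odd_L cp_L; congr (_ * (_ * _)).
rewrite prod_alpha; apply: eq_big => [b|b _]; last by rewrite cp_L.
by rewrite porbit_L (mem_imset _ _ ev_inj) head_L.
Qed.

End Lift.
End H.

Unset Implicit Arguments.
Set Strict Implicit.

Theorem lemma4p4 (R : realType) (m n : nat) (A : 'M[quat R]_(m, n)) (t : R)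
    (i : 'I_n) (j : 'I_m) :
  let AAs := A *m conjtr A in
  let B := row_repl AAs j (row i (conjtr A)) in
  let r (k : nat) : quat R :=
    if k == m then rdet j B
    else \sum_(alpha : {set 'I_m} | (j \in alpha) && (#|alpha| == k))
           rdet_principal B alpha j in
  rdet j (row_repl ((qreal t)%:M + AAs) j (row i (conjtr A)))
  = \sum_(1 <= k < m.+1) r k * qreal t ^+ (m - k).
Proof.
move=> AAs B r.
set N := row_repl _ j _.
have HN : forall x y, N x y = B x y + (if (x == y) && (x != j) then qreal t else 0).
  move=> x y; rewrite /N /B /row_repl !mxE.
  case: (eqVneq x j) => xj /=; first by rewrite andbF addr0.
  by rewrite andbT; case: (x == y); rewrite ?mulr1n ?mulr0n ?add0r ?addr0 // addrC.
rewrite (S1 HN).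
have rk : forall k, (1 <= k <= m)%N ->
    r k = \sum_(alpha : {set 'I_m} | (j \in alpha) && (#|alpha| == k)) rdetS alpha j B.
  move=> k /andP[k1 km]; rewrite /r; case: eqP => [->|_].
    rewrite -S0 (big_pred1 [set: 'I_m]) // => alpha.
    apply/andP/eqP => [[_ /eqP c]|->]; last by rewrite inE cardsT card_ord eqxx.
    by apply/eqP; rewrite eqEcard subsetT cardsT card_ord c leqnn.
  by apply: eq_bigr => alpha /andP[jA _]; apply: S2.
apply/esym.
transitivity (\sum_(1 <= k < m.+1) \sum_(alpha : {set 'I_m})
   (if (j \in alpha) && (#|alpha| == k) then
      rdetS alpha j B * qreal t ^+ (m - #|alpha|) else 0)).
  apply: eq_big_nat => k /andP[k1 km]; rewrite rk; last by rewrite k1 -ltnS.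
  rewrite mulr_suml big_mkcond; apply: eq_bigr => alpha _.
  by case: ifP => // /andP[_ /eqP ->].
rewrite exchange_big /= [RHS]big_mkcond; apply: eq_bigr => alpha _.
case: (boolP (j \in alpha)) => jA /=; last by rewrite big1.
have c1 : (0 < #|alpha|)%N by apply/card_gt0P; exists j.
have c2 : (#|alpha| < m.+1)%N by rewrite ltnS -[X in (_ <= X)%N]card_ord max_card.
rewrite (bigD1_seq #|alpha|) /= ?eqxx ?iota_uniq //; last by rewrite mem_index_iota c1.
rewrite big1_seq ?addr0 // => k /andP[kn _].
by rewrite eq_sym (negbTE kn).
Qed.
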